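(* For the system $\dot x(t) = f(t,x(t)) + g(t,x(t))\lambda(t)u_1(t)$, $\dot\lambda(t) = \mathcal{S}\lambda(t)\omega(t)$, $\dot\omega(t) = u_2(t)$ (with $f$, $g$, $\lambda$, $\omega$, $u_1$, $u_2$ as described in the context), there exist smooth functions $x \in C^{\infty}(\mathbb{R}_{\geq 0},\mathbb{R}^n)$ that are not outer-loop trajectories of this system, i.e., there is no choice of $\lambda$, $\omega$, $u_1$, $u_2$ with the stated regularity and constraints for which $x$ satisfies the first equation. Consequently, no exact universal tracking controller (one achieving $\limsup_{t\to\infty}\|x(t)-x^\star(t)\| = 0$ for every smooth desired trajectory $x^\star$) exists for this system.
   Context: Consider a vehicle with a pivoted unidirectional actuator modeled by $\dot x = f(t,x) + g(t,x)\lambda u_1$, $\dot\lambda = \mathcal{S}\lambda\omega$, $\dot\omega = u_2$, where $x:\mathbb{R}_{\geq0}\to\mathbb{R}^n$ is the continuous outer-loop state, $f \in C^\infty(\mathbb{R}_{\geq0}\times\mathbb{R}^n,\mathbb{R}^n)$ is a smooth drift, $g\in C^\infty(\mathbb{R}_{\geq0}\times\mathbb{R}^n,\mathbb{R}^{n\times 2})$ is a smooth, bounded, uniformly full-rank actuation matrix, $\lambda \in C^1(\mathbb{R}_{\geq0},\mathbb{S}^1)$ is the actuator orientation (unit vector in $\mathbb{R}^2$), $\mathcal{S} = e_2e_1^{T} - e_1e_2^{T}$ is the $2\times2$ skew-symmetric rotation matrix, $\omega:\mathbb{R}_{\geq0}\to\mathbb{R}$ is the pivot angular velocity, $u_1:\mathbb{R}_{\geq0}\to\mathbb{R}_{\geq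 0}$ is a piecewise continuous nonnegative (unidirectional) input, and $u_2:\mathbb{R}_{\geq0}\to\mathbb{R}$ is a piecewise continuous angular acceleration input. An outer-loop trajectory is a function $x$ for which such $\lambda,\omega,u_1,u_2$ exist so that the equations hold. *)

(* Defs.v *)
From HB Require Import structures.
From mathcomp Require Import all_boot all_order all_algebra.
From mathcomp Require Import all_classical all_reals all_analysis.
Set Implicit Arguments. Unset Strict Implicit. Unset Printing Implicit Defensive.
Import Order.TTheory GRing.Theory Num.Theory.
Import numFieldNormedType.Exports.
Local Open Scope classical_set_scope.
Local Open Scope ring_scope.

Section Defs.
Variable R : realType.

Fixpoint Dseq (V W : normedModType R) (vs : seq V) (F : V -> W) : V -> W :=
  match vs with
  | [::] => F
  | v :: vs' => fun p => 'D_v (Dseq vs' F) p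
  end.

Definition smooth (V W : normedModType R) (F : V -> W) : Prop :=
  forall vs : seq V,
    continuous (Dseq vs F) /\ forall (v p : V), derivable (Dseq vs F) p v.

Definition smooth_ge0_2 (n : nat) (W : normedModType R) (F : R -> 'cV[R]_n -> W) : Prop :=
  exists G : R * 'cV[R]_n -> W,
    smooth G /\ forall t x, 0 <= t -> G (t, x) = F t x.

Definition smooth_ge0 (V : normedModType R) (F : R -> V) : Prop :=
  exists G : R -> V, smooth G /\ forall t, 0 <= t -> G t = F t.

Definition cont_ge0 (V : normedModType R) (F : R -> V) : Prop :=
  forall t : R, 0 <= t ->
    F s @[s --> within [set s : R | 0 <= s] (nbhs t)] --> F t.

Definition deriv_ge0 (V : normedModType R) (F : R -> V) (t : R) (d : V) : Prop :=
  (fun h : R => h^-1 *: (F (t + h) - F t))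
    @ within [set h : R | h != 0 /\ 0 <= t + h] (nbhs (0:R)) --> d.

Definition locfin (E : set R) : Prop :=
  forall T : R, finite_set (E `&` `[0, T]).

Definition piecewise_cont (u : R -> R) : Prop :=
  (exists E : set R, locfin E /\
     (forall t, 0 < t -> ~ E t -> {for t, continuous u}) /\
     (~ E 0 -> u s @[s --> 0^'+] --> u 0)) /\
  (forall t, 0 <= t -> exists l : R, u s @[s --> t^'+] --> l) /\
  (forall t, 0 < t -> exists l : R, u s @[s --> t^'-] --> l).

Definition Smat : 'M[R]_2 :=
  delta_mx (@Ordinal 2 1 isT) ord0 - delta_mx ord0 (@Ordinal 2 1 isT).

Definition on_S1 (l : 'cV[R]_2) : Prop :=
  l ord0 ord0 ^+ 2 + l (@Ordinal 2 1 isT) ord0 ^+ 2 = 1.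

Definition admissible_g (n : nat) (g : R -> 'cV[R]_n -> 'M[R]_(n, 2)) : Prop :=
  smooth_ge0_2 (fun t x => g t x) /\
  (exists M : R, forall t x, 0 <= t -> `|g t x| <= M) /\
  (exists c : R, 0 < c /\
     forall t x (v : 'cV[R]_2), 0 <= t -> c * `|v| <= `|g t x *m v|).

Definition outer_loop_traj (n : nat) (f : R -> 'cV[R]_n -> 'cV[R]_n)
    (g : R -> 'cV[R]_n -> 'M[R]_(n, 2)) (x : R -> 'cV[R]_n) : Prop :=
  exists (lam : R -> 'cV[R]_2) (om u1 u2 : R -> R),
    (forall t, 0 <= t -> on_S1 (lam t)) /\
    (exists dlam : R -> 'cV[R]_2,
        (forall t, 0 <= t -> deriv_ge0 lam t (dlam t)) /\ cont_ge0 dlam) /\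
    piecewise_cont u1 /\ (forall t, 0 <= t -> 0 <= u1 t) /\
    piecewise_cont u2 /\
    cont_ge0 om /\
    exists E : set R, locfin E /\
      forall t, 0 <= t -> ~ E t ->
        deriv_ge0 x t (f t (x t) + u1 t *: (g t (x t) *m lam t)) /\
        deriv_ge0 lam t (om t *: (Smat *m lam t)) /\
        deriv_ge0 om t (u2 t).

End Defs.

(* Main.v *)
Require Import Defs.
From HB Require Import structures.
From mathcomp Require Import all_boot all_order all_algebra.
From mathcomp Require Import all_classical all_reals all_analysis.
From mathcomp Require Import lra ring.
Import Order.TTheory GRing.Theory Num.Theory.
Import numFieldNormedType.Exports.
Local Open Scope classical_set_scope.
Local Open Scope ring_scope.
Section H.
Variable R : realType.

Lemma seq_avoid (s : seq R) (a : R) :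
  exists2 e : R, 0 < e & forall y, y \in s -> y != a -> e <= `|y - a|.
Proof.
elim: s => [|y s [e e0 He]]; first by exists 1.
have [ya|ya] := eqVneq y a.
  exists e => // z; rewrite inE => /orP[/eqP->|]; first by rewrite ya eqxx.
  exact: He.
exists (Num.min e `|y - a|); first by rewrite lt_min e0 normr_gt0 subr_eq0.
move=> z; rewrite inE => /orP[/eqP->|zs za]; first by rewrite ge_min lexx orbT.
by rewrite ge_min He.
Qed.

Lemma locfin_avoid (E : set R) : locfin E ->
  exists2 e : R, 0 < e & forall tau, 0 < tau -> tau < e -> ~ E (1 + tau) /\ ~ E (1 - tau).
Proof.
move=> /(_ 2) /finite_seqP [s Hs].
have [e e0 He] := seq_avoid s 1.
exists (Num.min e 1); first by rewrite lt_min e0 ltr01.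
move=> tau t0; rewrite lt_min => /andP[te t1].
have inI u : `|u - 1| = tau -> E u -> [set` s] u.
  move=> hu Eu; rewrite -Hs; split => //.
  rewrite /= in_itv /=; apply/andP; split.
  - have := ler_norm (1 - u); rewrite distrC hu; lra.
  - have := ler_norm (u - 1); rewrite hu; lra.
split=> Eu.
- have h : `|1 + tau - 1| = tau by rewrite addrC addKr ger0_norm // ltW.
  have /= := inI _ h Eu => /He; rewrite h.
  have -> : 1 + tau != 1 by rewrite -subr_eq0 addrC addKr gt_eqF.
  by move=> /(_ isT); rewrite leNgt te.
- have h : `|1 - tau - 1| = tau by rewrite addrC addKr normrN ger0_norm // ltW.
  have /= := inI _ h Eu => /He; rewrite h.
  have -> : 1 - tau != 1 by rewrite -subr_eq0 addrC addKr oppr_eq0 gt_eqF.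
  by move=> /(_ isT); rewrite leNgt te.
Qed.


Lemma within_witness (t : R) (P : R -> Prop) : 0 < t ->
  (\forall h \near within [set h : R | h != 0 /\ 0 <= t + h] (nbhs (0:R)), P h) ->
  forall e, 0 < e -> exists h, 0 < h < e /\ P h.
Proof.
move=> t0 /nbhs_ballP [r /= r0 Hr] e e0.
set h := Num.min (Num.min r e) t / 2.
have hm : 0 < Num.min (Num.min r e) t by rewrite !lt_min r0 e0 t0.
have h0 : 0 < h by rewrite divr_gt0.
have hle : h < Num.min (Num.min r e) t by rewrite /h ltr_pdivrMr //; lra.
move: hle; rewrite !lt_min => /andP[/andP[hr he] ht].
exists h; split; first by rewrite h0 he.
apply: Hr; first by rewrite /ball /= sub0r normrN gtr0_norm.
split; [by rewrite gt_eqF | lra].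
Qed.

Lemma deriv_uniq (V : normedModType R) (X : R -> V) t d d' (k : V) : 0 < t ->
  (forall h, h != 0 -> h^-1 *: (X (t+h) - X t) = d' + h *: k) ->
  deriv_ge0 X t d -> d = d'.
Proof.
move=> t0 Hq Hd; apply/eqP/negPn/negP => ne.
have e0 : 0 < `|d - d'| by rewrite normr_gt0 subr_eq0.
move/cvgrPdist_lt: Hd => /(_ (`|d - d'| / 2)) /(_ (divr_gt0 e0 (ltr0Sn _ 1))) H.
have k0 : 0 < `|k| + 1 by rewrite ltr_wpDl.
have [h [/andP[h0 he] Ph]] := @within_witness t _ t0 H _ (divr_gt0 (divr_gt0 e0 (ltr0Sn _ 1)) k0).
move: Ph; rewrite Hq ?gt_eqF // => Ph.
have : `|d - d'| <= `|d - (d' + h *: k)| + `|h *: k|.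
  have -> : d - d' = (d - (d' + h *: k)) + h *: k by rewrite opprD addrA subrK.
  exact: ler_normD.
rewrite normrZ gtr0_norm //.
have : h * `|k| <= `|d - d'| / 2.
  move: he; rewrite ltr_pdivlMr // => he.
  apply: le_trans (ltW he); rewrite mulrDr mulr1 ler_wpDr //; exact: ltW.
move: Ph; set a := `|d - d'|; set b := `|_ - _|; lra.
Qed.

Lemma mx_entry_le m p (M : 'M[R]_(m,p)) i j : `|M i j| <= `|M|.
Proof.
rewrite [leRHS]/Num.Def.normr/= mx_normrE.
by apply: le_trans; last exact: (le_bigmax _ _ (i, j)).
Qed.

Lemma mx_le_entries m p (M : 'M[R]_(m,p)) k : 0 <= k ->
  (forall i j, `|M i j| <= k) -> `|M| <= k.
Proof.
move=> k0 H; rewrite [leLHS]/Num.Def.normr/= mx_normrE.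
by apply: bigmax_le => // -[i j] _; exact: H.
Qed.

Lemma mulmx_norm m p (A : 'M[R]_(m,p)) (v : 'cV[R]_p) :
  `|A *m v| <= p%:R * `|A| * `|v|.
Proof.
apply: mx_le_entries; first by rewrite !mulr_ge0.
move=> i j; rewrite mxE.
apply: le_trans (ler_norm_sum _ _ _) _.
rewrite -mulrA mulr_natl -[in X in _ *+ X](card_ord p) -sumr_const.
apply: ler_sum => k _; rewrite normrM.
by apply: ler_pM; rewrite ?normr_ge0 ?mx_entry_le.
Qed.


Lemma line_derive (V : normedModType R) n (G : V -> 'cV[R]_n) (y d : V) (s : R) :
  derivable G (y + s *: d) d ->
  derivable (fun s : R => G (y + s *: d)) s 1 /\
  'D_1 (fun s : R => G (y + s *: d)) s = 'D_d G (y + s *: d).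
Proof.
have E : (fun h : R => h^-1 *: (((fun s : R => G (y + s *: d)) \o shift s) (h *: 1)
            - G (y + s *: d))) =
         (fun h : R => h^-1 *: ((G \o shift (y + s *: d)) (h *: d) - G (y + s *: d))).
  apply/funext => h /=; congr (_ *: (G _ - _)).
  by rewrite [h *: 1]mulr1 scalerDl addrCA addrA.
by rewrite /derivable /derive E.
Qed.

Lemma comp_derive (V : normedModType R) n (G : V -> 'cV[R]_n) (y d : V) (s : R) i j :
  derivable G (y + s *: d) d ->
  is_derive s 1 (fun s : R => G (y + s *: d) i j) (('D_d G (y + s *: d)) i j).
Proof.
move=> /line_derive [D1 D2].
have D3 := (derivable_mxP _ _ _).1 D1 i j.
apply: DeriveDef => //.
by rewrite -D2 (derive_mx D1) mxE.
Qed.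


Lemma mvt_bound (V : normedModType R) n (G : V -> 'cV[R]_n) (q0 d : V) :
  (forall p, derivable G p d) -> {for q0, continuous (fun p => 'D_d G p)} ->
  exists2 K : R, 0 <= K & exists2 del : R, 0 < del & forall y (sg : R), `|y - q0| < del ->
     `|sg| * `|d| < del -> `|G (y + sg *: d) - G y| <= K * `|sg|.
Proof.
move=> Gd Dc.
move/cvgrPdist_lt: Dc => /(_ 1 ltr01) /nbhs_ballP [r /= r0 Hr].
exists (`|'D_d G q0| + 1); first by rewrite addr_ge0.
exists (r / 2); first by rewrite divr_gt0.
move=> y sg Hy Hs.
have Kb : forall s : R, `|s| <= `|sg| ->
    `|'D_d G (y + s *: d)| <= `|'D_d G q0| + 1.
  move=> s hs.
  have : `|'D_d G q0 - 'D_d G (y + s *: d)| < 1.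
    apply: Hr; rewrite -ball_normE /= opprD addrA.
    apply: (le_lt_trans (ler_normD _ _)).
    rewrite distrC normrN normrZ.
    have : `|s| * `|d| <= `|sg| * `|d| by rewrite ler_wpM2r.
    move: Hy Hs; lra.
  move=> h; rewrite -[X in `|X|](subrK ('D_d G q0)) (le_trans (ler_normD _ _)) //.
  by rewrite addrC lerD2l distrC ltW.
apply: mx_le_entries => [|i j].
  by rewrite mulr_ge0 // addr_ge0.
rewrite !mxE.
set psi := fun s : R => G (y + s *: d) i j.
have -> : G (y + sg *: d) i j - G y i j = psi sg - psi 0.
  by rewrite /psi scale0r addr0.
have der (s : R) : is_derive s 1 psi (('D_d G (y + s *: d)) i j) by apply: comp_derive.
have cont : forall a b : R, {within `[a, b], continuous psi}.
  move=> a b; apply: derivable_within_continuous => s _.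
  exact: (@ex_derive _ _ _ _ _ _ _ (der s)).
have key : forall c : R, `|c| <= `|sg| -> `|('D_d G (y + c *: d)) i j| <= `|'D_d G q0| + 1.
  move=> c hc; apply: le_trans (Kb c hc); exact: mx_entry_le.
have [sg0|sg0] := leP 0 sg.
  have [c c0 ->] := @MVT_segment _ psi (fun s => ('D_d G (y + s *: d)) i j) 0 sg sg0 (fun x _ => der x) (cont 0 sg).
  rewrite subr0 normrM [`|sg|]ger0_norm //.
  apply: ler_wpM2r => //; apply: key; rewrite !ger0_norm //;
  by move: c0; rewrite in_itv /= => /andP[].
have [c c0] := @MVT_segment _ psi (fun s => ('D_d G (y + s *: d)) i j) sg 0 (ltW sg0) (fun x _ => der x) (cont sg 0).
move/eqP; rewrite -opprB eqr_oppLR => /eqP ->.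
rewrite normrN normrM sub0r normrN [`|sg|]ltr0_norm //.
apply: ler_wpM2r; first by rewrite oppr_ge0 ltW.
apply: key.
move: c0; rewrite in_itv /= => /andP[c0 c1'].
by rewrite ler0_norm // ltr0_norm // lerN2.
Qed.

Lemma zid (V : zmodType) (a x y x' y' : V) : (a + x + y) - (a + x' + y') = (x - x') + (y - y').
Proof. rewrite opprD opprD !addrA [_ - a]addrAC -[a + x]addrC addrK. by rewrite -!addrA; congr (_ + _); rewrite addrC -addrA [y + _]addrC. Qed.

Definition quad (V : normedModType R) (s : R) (a b c : V) (t : R) : V :=
  a + (t - s) *: b + ((t - s) ^+ 2) *: c.
Arguments quad {V}.

Lemma quad_derive (V : normedModType R) s (a b c : V) (t v : R) :
  derivable (quad s a b c) t v /\
  'D_v (quad s a b c) t = quad s (v *: b) ((2 * v) *: c) 0 t.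
Proof.
set L := quad s (v *: b) ((2 * v) *: c) 0 t.
suff H : (fun h : R => h^-1 *: ((quad s a b c \o shift t) (h *: v) - quad s a b c t))
           @ 0^' --> L.
  by split; [apply/cvg_ex; exists L | apply: cvg_lim].
apply/cvgrPdist_lt => e e0.
have k0 : 0 < v ^+ 2 * `|c| + 1 by rewrite ltr_wpDl // mulr_ge0 // sqr_ge0.
near=> h.
have hn0 : h != 0 by near: h; exact: nbhs_dnbhs_neq.
have -> : h^-1 *: ((quad s a b c \o shift t) (h *: v) - quad s a b c t)
          = L + (h * v ^+ 2) *: c.
  rewrite /L /quad /= zid -!scalerBl scalerDr !scalerA scaler0 addr0.
  rewrite -[RHS]addrA -scalerDl.
  congr (_ *: _ + _ *: _).
    by rewrite /GRing.scale /=; field.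
  by rewrite /GRing.scale /=; field.
rewrite opprD addrA subrr sub0r normrN normrZ.
have : `|h| < e / (v ^+ 2 * `|c| + 1) by near: h; apply: dnbhs0_lt; rewrite divr_gt0.
rewrite ltr_pdivlMr // => hh.
apply: le_lt_trans hh; rewrite normrM [`|v ^+ 2|]ger0_norm ?sqr_ge0 //.
rewrite -mulrA; apply: ler_wpM2l => //; by rewrite lerDl.
Unshelve. all: by end_near.
Qed.


Lemma Dseq_quad (V : normedModType R) s (a b c : V) (vs : seq R) :
  exists a' b' c', Dseq vs (quad s a b c) = quad s a' b' c'.
Proof.
elim: vs => [|v vs [a' [b' [c' IH]]]]; first by exists a, b, c.
exists (v *: b'), ((2 * v) *: c'), 0 => /=.
apply/funext => p; rewrite IH; by have := (quad_derive _ s a' b' c' p v).2.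
Qed.

Lemma smooth_quad (V : normedModType R) s (a b c : V) : smooth (quad s a b c).
Proof.
move=> vs; have [a' [b' [c' ->]]] := Dseq_quad _ s a b c vs.
split; last by move=> v p; exact: (quad_derive _ s a' b' c' p v).1.
move=> p; apply: differentiable_continuous; apply/derivable1_diffP.
exact: (quad_derive _ s a' b' c' p 1).1.
Qed.


Lemma near0_abs (e : R) : 0 < e -> \forall x \near (0:R), `|x| < e.
Proof. by move=> e0; exists e => // z; rewrite /ball /= sub0r normrN. Qed.
Arguments near0_abs {e}.

Lemma near0_absM (k e : R) : 0 <= k -> 0 < e -> \forall x \near (0:R), `|x| * k < e.
Proof.
move=> k0 e0; have k1 : 0 < k + 1 by rewrite ltr_wpDl.
move: (near0_abs (divr_gt0 e0 k1) : \forall x \near (0:R), `|x| < e / (k + 1)); apply: filterS => x; rewrite ltr_pdivlMr // => h.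
apply: le_lt_trans h; apply: ler_wpM2l => //; lra.
Qed.

Lemma fbound n (G : R * 'cV[R]_n -> 'cV[R]_n) : smooth G ->
  exists2 K : R, 0 <= K & forall A : 'cV[R]_n,
  \forall tau \near (0:R),
    `|G (1 + tau, tau *: G (1,0) + (tau ^+ 2) *: A) - G (1, 0)| <= K * `|tau|.
Proof.
move=> HG.
set q0 : R * 'cV[R]_n := (1, 0).
set F := G q0.
set d1 : R * 'cV[R]_n := (1, F).
have dG : derivable G q0 d1 := (HG [::]).2 d1 q0.
move/cvg_ex: dG => [/= l Hl].
move/cvgrPdist_lt: Hl => /(_ 1 ltr01) Hl.
have B1 : \forall h \near (0:R), `|G (q0 + h *: d1) - G q0| <= (`|l| + 1) * `|h|.
  move: Hl; rewrite near_withinE; apply: filterS => h Hh.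
  have [->|hn0] := eqVneq h 0; first by rewrite scale0r addr0 subrr normr0 normr0 mulr0.
  have := Hh hn0; rewrite [q0 + _]addrC; set D := G _ - G q0 => HD.
  have -> : D = h *: (h^-1 *: D) by rewrite scalerA mulfV // scale1r.
  rewrite normrZ mulrC; apply: ler_wpM2r => //.
  have : `|h^-1 *: D| <= `|l| + `|l - h^-1 *: D|.
    set w := h^-1 *: D.
    by rewrite {1}(_ : w = l - (l - w)) ?ler_normB // opprB addrC subrK.
  move: HD; lra.
exists (`|l| + 2); first by rewrite addr_ge0.
move=> A.
have [K2 K20 [del del0 Hm]] := @mvt_bound _ _ G q0 (0, A) ((HG [::]).2 (0, A)) ((HG [:: (0, A)]).1 q0).
near=> tau.
have -> : (1 + tau, tau *: F + tau ^+ 2 *: A) = (q0 + tau *: d1) + tau ^+ 2 *: (0, A).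
  rewrite /q0 /d1; congr (_, _) => /=.
    by rewrite scaler0 addr0 [tau%:A]mulr1.
  by rewrite add0r.
have H1 : `|G (q0 + tau *: d1) - G q0| <= (`|l| + 1) * `|tau| by near: tau.
have t1 : `|tau| < 1 by near: tau; exact: near0_abs.
have ht : `|tau| * `|d1| < del by near: tau; exact: near0_absM.
have ht2 : `|tau| * `|((0 : R), A)| < del by near: tau; exact: near0_absM.
have hK : `|tau| * K2 < 1 by near: tau; exact: near0_absM.
have hy : `|(q0 + tau *: d1) - q0| = `|tau| * `|d1| by rewrite addrC addKr normrZ.
have tt : `|tau ^+ 2| = `|tau| * `|tau| by rewrite normrX expr2.
have H2 : `|G ((q0 + tau *: d1) + tau ^+ 2 *: (0, A)) - G (q0 + tau *: d1)| <= K2 * `|tau ^+ 2|.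
  apply: Hm; first by rewrite hy.
  rewrite tt -mulrA; apply: le_lt_trans ht2.
  rewrite mulrA; apply: ler_wpM2r => //.
  have := normr_ge0 tau; nra.
have H3 : K2 * `|tau ^+ 2| <= `|tau|.
  rewrite tt; have := normr_ge0 tau; nra.
rewrite -/F in H1 *.
rewrite (_ : G (q0 + tau *: d1 + tau ^+ 2 *: (0, A)) - F = (G (q0 + tau *: d1 + tau ^+ 2 *: (0, A)) - G (q0 + tau *: d1)) + (G (q0 + tau *: d1) - F)); last by rewrite addrA subrK.
apply: (le_trans (ler_normD _ _)).
move: H1 H2 H3; lra.
Unshelve. all: by end_near.
Qed.


Lemma deriv_cont (V : normedModType R) (X : R -> V) t d : 0 < t -> deriv_ge0 X t d ->
  forall eta, 0 < eta -> \forall h \near (0:R), `|X (t + h) - X t| < eta.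
Proof.
move=> t0 Hd eta eta0.
move/cvgrPdist_lt: Hd => /(_ 1 ltr01); rewrite near_withinE => Hn.
have d1 : 0 < `|d| + 1 by rewrite ltr_wpDl.
near=> h.
have [->|hn0] := eqVneq h 0; first by rewrite addr0 subrr normr0.
have Hh : h != 0 /\ 0 <= t + h -> `|d - h^-1 *: (X (t + h) - X t)| < 1.
  by near: h; exact: Hn.
have ht : `|h| < t by near: h; exact: near0_abs.
have he : `|h| < eta / (`|d| + 1) by near: h; apply: near0_abs; rewrite divr_gt0.
have := Hh (conj hn0 _); set w := h^-1 *: _ => Hw.
have {}Hw : `|w| < `|d| + 1.
  have := ler_normB d (d - w); rewrite opprB addrC subrK.
  have : 0 <= t + h by have := ler_norm (- h); rewrite normrN; lra.
  move=> /Hw; lra.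
have -> : X (t + h) - X t = h *: w by rewrite /w scalerA mulfV // scale1r.
rewrite normrZ; move: he; rewrite ltr_pdivlMr // => he.
apply: le_lt_trans he; apply: ler_wpM2l => //; exact: ltW.
Unshelve. all: by end_near.
Qed.

Lemma quad_quot (V : normedModType R) s (a b c : V) t h : h != 0 ->
  h^-1 *: (quad s a b c (t + h) - quad s a b c t) = (b + (2 * (t - s)) *: c) + h *: c.
Proof.
move=> hn0; rewrite /quad zid -!scalerBl scalerDr !scalerA -[RHS]addrA -scalerDl.
rewrite -[b in RHS]scale1r; by congr (_ *: _ + _ *: _); field.
Qed.

Lemma zid2 (V : zmodType) (u v p q : V) : p + q = u + v - (u - p) - (v - q).
Proof. by rewrite !opprB [u + v]addrC -(addrA v) (addrCA u) subrr addr0 [v + p]addrC -(addrA p) (addrCA v) subrr addr0. Qed.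

Lemma final_contra (W : normedModType R) (F fp fm Gp Gm G0 A : W) (a b tau K c B : R) :
  0 < tau -> 0 <= a -> 0 <= b -> 0 < c -> 0 <= K ->
  `|F - fp| <= K * tau -> `|F - fm| <= K * tau ->
  a *: Gp = (F - fp) + tau *: A -> b *: Gm = (F - fm) - tau *: A ->
  c / 2 <= `|G0| -> `|Gp - G0| <= c / 4 -> `|Gm - G0| <= c / 4 -> `|G0| + c / 4 <= B ->
  K * c + 8 * K * B < `|A| * c -> False.
Proof.
move=> t0 a0 b0 c0 K0 hp hm ep em g0l gp gm gB big.
have S : (a + b) *: G0 = (a *: Gp + b *: Gm) - a *: (Gp - G0) - b *: (Gm - G0).
  by rewrite !scalerBr scalerDl (@zid2 _ (a *: Gp) (b *: Gm)).
have S2 : a *: Gp + b *: Gm = (F - fp) + (F - fm) by rewrite ep em addrACA subrr addr0.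
have i1 : `|(a + b) *: G0| <= 2 * K * tau + (a + b) * (c / 4).
  rewrite S S2.
  apply: (le_trans (ler_normB _ _)); apply: (le_trans (lerD (ler_normB _ _) (lexx _))).
  rewrite !normrZ !ger0_norm //.
  have := ler_normD (F - fp) (F - fm).
  have : a * `|Gp - G0| <= a * (c / 4) by apply: ler_wpM2l.
  have : b * `|Gm - G0| <= b * (c / 4) by apply: ler_wpM2l.
  lra.
rewrite normrZ ger0_norm ?addr_ge0 // in i1.
have i2 : (a + b) * (c / 2) <= (a + b) * `|G0| by apply: ler_wpM2l; rewrite ?addr_ge0.
have i3 : a * c <= 8 * K * tau by nra.
have i4 : tau * `|A| <= a * `|Gp| + K * tau.
  have E : tau *: A = a *: Gp - (F - fp) by rewrite ep addrC addKr.
  have := ler_normB (a *: Gp) (F - fp); rewrite -E !normrZ [`|tau|]gtr0_norm // [`|a|]ger0_norm //; lra.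
have i5 : `|Gp| <= B.
  have := ler_normD (Gp - G0) G0; rewrite subrK; lra.
have i6 : a * `|Gp| <= a * B by apply: ler_wpM2l.
have i7 : tau * `|A| * c <= (a * B + K * tau) * c by apply: ler_wpM2r; [exact: ltW| lra].
have i8 : a * B * c <= 8 * K * tau * B.
  have B0 : 0 <= B by have := normr_ge0 G0; lra.
  rewrite -mulrA [B * c]mulrC mulrA; apply: ler_wpM2r => //.
have : tau * (`|A| * c) <= tau * (K * c + 8 * K * B) by nra.
rewrite ler_pM2l // leNgt big //.
Qed.


Lemma S1_bounds (l : 'cV[R]_2) : on_S1 l -> 1 / 2 <= `|l| /\ `|l| <= 1.
Proof.
rewrite /on_S1 => h.
have b0 := mx_entry_le _ _ l ord0 ord0.
have b1 := mx_entry_le _ _ l (@Ordinal 2 1 isT) ord0.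
have s0 : l ord0 ord0 ^+ 2 = `|l ord0 ord0| ^+ 2 by rewrite real_normK ?num_real.
have s1 : l (@Ordinal 2 1 isT) ord0 ^+ 2 = `|l (@Ordinal 2 1 isT) ord0| ^+ 2 by rewrite real_normK ?num_real.
rewrite s0 s1 in h.
split.
  have := normr_ge0 (l ord0 ord0); have := normr_ge0 (l (@Ordinal 2 1 isT) ord0).
  move: b0 b1 h; set p := `|l ord0 ord0|; set q := `|l _ ord0|; set L := `|l|.
  nra.
apply: mx_le_entries => // i j.
rewrite (ord1 j).
case: i => [[|[|k]] hi] //.
- have -> : Ordinal hi = ord0 by apply: val_inj.
  have := normr_ge0 (l ord0 ord0); have := normr_ge0 (l (@Ordinal 2 1 isT) ord0).
  move: h; set p := `|l ord0 ord0|; set q := `|l _ ord0|; nra.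
- have -> : Ordinal hi = (@Ordinal 2 1 isT) by apply: val_inj.
  have := normr_ge0 (l ord0 ord0); have := normr_ge0 (l (@Ordinal 2 1 isT) ord0).
  move: h; set p := `|l ord0 ord0|; set q := `|l _ ord0|; nra.
Qed.


Lemma Gdiff m (g1 g0 : 'M[R]_(m,2)) (l1 l0 : 'cV[R]_2) (e1 e2 : R) :
  `|g1 - g0| <= e1 -> `|l1 - l0| <= e2 -> `|l1| <= 1 ->
  `|g1 *m l1 - g0 *m l0| <= 2 * e1 + 2 * `|g0| * e2.
Proof.
move=> h1 h2 h3.
have -> : g1 *m l1 - g0 *m l0 = (g1 - g0) *m l1 + g0 *m (l1 - l0).
  by rewrite mulmxBl mulmxBr addrA subrK.
apply: (le_trans (ler_normD _ _)); apply: lerD.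
  apply: (le_trans (mulmx_norm _ _ _ _)).
  have := normr_ge0 (g1 - g0); have := normr_ge0 l1; nra.
apply: (le_trans (mulmx_norm _ _ _ _)).
apply: ler_wpM2l; first by rewrite mulr_ge0.
exact: h2.
Qed.

Lemma main (n : nat)
    (f : R -> 'cV[R]_n -> 'cV[R]_n) (g : R -> 'cV[R]_n -> 'M[R]_(n, 2)) :
  smooth_ge0_2 f -> admissible_g g ->
  exists x : R -> 'cV[R]_n, smooth_ge0 x /\ ~ outer_loop_traj f g x.
Proof.
move=> [G [HG HGf]] [[Gg [HGg HGgg]] [_ [c [c0 Hc]]]].
have [K K0 HK] := fbound _ _ HG.
set F := f 1 0.
have GF : G (1, 0) = F by rewrite HGf.
set e2 : 'cV[R]_2 := const_mx 1.
set A0 := g 1 0 *m e2.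
have e2n : 0 < `|e2|.
  rewrite normr_gt0; apply/negP => /eqP h.
  by have := congr1 (fun M : 'cV[R]_2 => M ord0 ord0) h; rewrite !mxE => /eqP; rewrite oner_eq0.
have a0 : 0 < `|A0| := lt_le_trans (mulr_gt0 c0 e2n) (Hc 1 0 e2 ler01).
set C := 2%:R * `|g 1 0|.
have C0 : 0 <= C by rewrite mulr_ge0.
set B := C + c / 4.
set N := (K * c + 8 * K * B + 1) / (2 * `|A0| * c).
have N0 : 0 < N.
  rewrite divr_gt0 // ?mulr_gt0 //.
  have : 0 <= K * c by rewrite mulr_ge0 // ltW.
  have : 0 <= 8 * K * B by rewrite !mulr_ge0 // addr_ge0 // divr_ge0 // ltW.
  lra.
set x := quad 1 0 F (N *: A0).
exists x; split; first by exists x; split; [exact: smooth_quad|].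
move=> [lam [om [u1 [u2 [HS1 [[dlam [Hdlam _]] [_ [Hu1 [_ [_ [E [HE Heq]]]]]]]]]]]].
have xeq tau : x (1 + tau) = tau *: F + tau ^+ 2 *: (N *: A0).
  by rewrite /x /quad add0r addrAC subrr add0r.
have x1 : x 1 = 0.
  by rewrite /x /quad subrr scale0r expr0n /= scale0r !addr0.
have lc := @deriv_cont _ lam 1 (dlam 1) ltr01 (Hdlam 1 ler01).
have gc : {for 1, continuous (fun t => Gg (t, x t))}.
  apply: (@continuous_comp _ _ _ (fun t => (t, x t)) Gg).
    have xc : x @ (1:R) --> x 1 := ((smooth_quad _ 1 0 F (N *: A0)) [::]).1 1.
    exact: (@cvg_pair _ _ _ (nbhs (1:R)) (nbhs (1:R)) (nbhs (x 1)) _ _ _ id x cvg_id xc).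
  exact: ((HGg [::]).1 (1, x 1)).
have gn : forall eta, 0 < eta -> \forall h \near (0:R), `|g 1 0 - Gg (1 + h, x (1 + h))| < eta.
  move=> eta eta0; move/cvgrPdist_lt: gc => /(_ eta eta0).
  rewrite x1 -(HGgg _ _ ler01) => /nbhs0P; exact.
set eta1 := c / 16.
set eta2 := c / (8 * (C + 1)).
have eta10 : 0 < eta1 by rewrite divr_gt0.
have eta20 : 0 < eta2 by rewrite divr_gt0 // mulr_gt0 // ltr_wpDl.
have Hnear : \forall h \near (0:R),
   [/\ `|G (1 + h, h *: G (1,0) + h ^+ 2 *: (N *: A0)) - G (1, 0)| <= K * `|h|,
       `|lam (1 + h) - lam 1| < eta2 &
       `|g 1 0 - Gg (1 + h, x (1 + h))| < eta1].
  near=> h; split.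
  - by near: h; exact: HK.
  - by near: h; exact: lc.
  - by near: h; exact: gn.
move/nbhs_ballP: Hnear => [r /= r0 Hr].
have [eps eps0 Heps] := locfin_avoid _ HE.
set tau := Num.min r (Num.min eps 1) / 2.
have mpos : 0 < Num.min r (Num.min eps 1) by rewrite !lt_min r0 eps0 ltr01.
have t0 : 0 < tau by rewrite divr_gt0.
have tlt : tau < Num.min r (Num.min eps 1) by rewrite /tau ltr_pdivrMr //; lra.
move: tlt; rewrite !lt_min => /andP[tr /andP[te t1]].
have [Hp1 Hp2 Hp3] : _ := Hr tau ltac:(by rewrite /ball /= sub0r normrN gtr0_norm).
have [Hm1 Hm2 Hm3] : _ := Hr (- tau) ltac:(by rewrite /ball /= sub0r opprK gtr0_norm).
have [nEp nEm] := Heps tau t0 te.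
have tp0 : 0 <= 1 + tau by lra.
have tm0 : 0 <= 1 - tau by lra.
have [Dxp _] := Heq (1 + tau) tp0 nEp.
have [Dxm _] := Heq (1 - tau) tm0 nEm.
have Up := @deriv_uniq _ x (1 + tau) _ _ (N *: A0) ltac:(lra)
  (fun h hn => quad_quot _ 1 0 F (N *: A0) (1 + tau) h hn) Dxp.
have Um := @deriv_uniq _ x (1 - tau) _ _ (N *: A0) ltac:(lra)
  (fun h hn => quad_quot _ 1 0 F (N *: A0) (1 - tau) h hn) Dxm.
set fp := f (1 + tau) (x (1 + tau)).
set fm := f (1 - tau) (x (1 - tau)).
set Gp := g (1 + tau) (x (1 + tau)) *m lam (1 + tau).
set Gm := g (1 - tau) (x (1 - tau)) *m lam (1 - tau).
set G0 := g 1 0 *m lam 1.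
set A := (2 * N) *: A0.
have eA : forall s : R, (2 * s) *: (N *: A0) = s *: A.
  by move=> s; rewrite /A !scalerA; congr (_ *: _); ring.
have hCe : C * eta2 <= c / 8.
  rewrite /eta2 mulrA ler_pdivrMr ?mulr_gt0 ?ltr_wpDl //.
  have : 0 <= C * c by rewrite mulr_ge0 // ltW.
  nra.
apply: (@final_contra _ F fp fm Gp Gm G0 A (u1 (1 + tau)) (u1 (1 - tau)) tau K c B t0
   (Hu1 _ tp0) (Hu1 _ tm0) c0 K0).
- rewrite GF gtr0_norm // in Hp1.
  by rewrite distrC /fp -(HGf _ _ tp0) xeq.
- rewrite GF normrN gtr0_norm // in Hm1.
  by rewrite distrC /fm -(HGf _ _ tm0) xeq.
- move: Up; rewrite -/fp -/Gp addrAC subrr add0r eA => U.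
  by rewrite -[u1 _ *: Gp](addKr fp) U addrA [- fp + F]addrC.
- move: Um; rewrite -/fm -/Gm (_ : 1 - tau - 1 = - tau); last by rewrite addrAC subrr add0r.
  rewrite mulrN scaleNr eA => U.
  by rewrite -[u1 _ *: Gm](addKr fm) U addrA [- fm + F]addrC.
- have [l1 _] := S1_bounds _ (HS1 1 ler01).
  have := Hc 1 0 (lam 1) ler01; rewrite -/G0.
  have : c * (1 / 2) <= c * `|lam 1| by apply: ler_wpM2l => //; exact: ltW.
  lra.
- rewrite (HGgg _ _ tp0) distrC in Hp3.
  apply: le_trans (Gdiff _ _ _ _ _ eta1 eta2 (ltW Hp3) (ltW Hp2) (S1_bounds _ (HS1 _ tp0)).2) _.
  move: hCe; rewrite /eta1 /C; lra.
- rewrite (HGgg _ _ tm0) distrC in Hm3.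
  apply: le_trans (Gdiff _ _ _ _ _ eta1 eta2 (ltW Hm3) (ltW Hm2) (S1_bounds _ (HS1 _ tm0)).2) _.
  move: hCe; rewrite /eta1 /C; lra.
- have := mulmx_norm _ _ (g 1 0) (lam 1).
  have [_ l1] := S1_bounds _ (HS1 1 ler01).
  rewrite -/G0 /B -/C => h.
  have : C * `|lam 1| <= C by rewrite ler_piMr.
  lra.
- have hA : `|A| * c = K * c + 8 * K * B + 1.
    rewrite /A normrZ (@gtr0_norm _ (2 * N)); last by rewrite mulr_gt0.
    rewrite /N; field.
    by rewrite !gt_eqF.
  rewrite hA; lra.
Unshelve. all: by end_near.
Qed.

End H.

Theorem theorem1 (R : realType) (n : nat)
    (f : R -> 'cV[R]_n -> 'cV[R]_n) (g : R -> 'cV[R]_n -> 'M[R]_(n, 2)) :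
  smooth_ge0_2 f -> admissible_g g ->
  exists x : R -> 'cV[R]_n, smooth_ge0 x /\ ~ outer_loop_traj f g x.
Proof. exact: main. Qed.
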